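(* Let $\mu>1/2$, $0<\nu<1/2$. Let $\mathfrak F\in C^1(\mathbb{R})$ be such that $\mathfrak F'$ is even, nonnegative, and decreasing on $[0,\infty)$, and $\mathfrak F(\infty)-\mathfrak F(-\infty)=(\mu-\nu)\pi$. Then the function $x\mapsto H\mathfrak F(x)-H\mathfrak F(0)$ is even on $\mathbb{R}$ and increasing on $[0,\infty)$. Moreover, for all $y>x\ge0$, $$0\le H\mathfrak F(y)-H\mathfrak F(x)=\frac1\pi\int_x^y\frac{\mathfrak F(\gamma)-\mathfrak F(-\gamma)}{\gamma}\,d\gamma+\mathfrak R(x,y),\qquad\text{where } -2(\mu-\nu)\le\mathfrak R(x,y)\le 2(\mu-\nu).$$
   Context: Since $\mathfrak F$ does not decay at infinity, differences of its Hilbert transform are defined by $H\mathfrak F(y)-H\mathfrak F(x):=\frac1\pi\int_0^\infty\frac{\mathfrak F(y-\gamma)-\mathfrak F(y+\gamma)-\mathfrak F(x-\gamma)+\mathfrak F(x+\gamma)}{\gamma}\,d\gamma$, consistent with the Hilbert transform $Hf(x)=\frac1\pi\mathrm{p.v.}\int\frac{f(y)}{x-y}dy=\frac1\pi\int_0^\infty\frac{f(x-\gamma)-f(x+\gamma)}{\gamma}d\gamma$. *)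

(* Defs.v *)
From Stdlib Require Import Reals Lra.
Open Scope R_scope.

Definition lim_pinf (f : R -> R) (l : R) : Prop :=
  forall eps, 0 < eps -> exists M, forall x, M <= x -> Rabs (f x - l) < eps.

Definition lim_minf (f : R -> R) (l : R) : Prop :=
  forall eps, 0 < eps -> exists M, forall x, x <= M -> Rabs (f x - l) < eps.

Definition improper_int0 (g : R -> R) (l : R) : Prop :=
  (forall b, 0 <= b -> inhabited (Riemann_integrable g 0 b)) /\
  forall eps, 0 < eps -> exists M, forall b (pr : Riemann_integrable g 0 b),
      M <= b -> Rabs (RiemannInt pr - l) < eps.

(* Integrand defining H F(y) - H F(x). At gamma = 0 the numerator vanishes,
   so the value there (0 / 0 = 0 in Rocq) is irrelevant. *)
Definition HF_integrand (F : R -> R) (x y : R) (g : R) : R :=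
  (F (y - g) - F (y + g) - F (x - g) + F (x + g)) / g.

(* HF_diff F x y L  :<->  H F(y) - H F(x) = L, where
   H F(y) - H F(x) := (1/PI) * int_0^oo HF_integrand F x y. *)
Definition HF_diff (F : R -> R) (x y L : R) : Prop :=
  improper_int0 (HF_integrand F x y) (PI * L).

(* Main.v *)
Require Import Defs.
From Coquelicot Require Import Coquelicot.
From Stdlib Require Import Reals Lra FunctionalExtensionality.
Open Scope R_scope.

Lemma sing_cont (N : R -> R) (HN0 : N 0 = 0) (HN : forall g, ex_derive N g) z :
  continuous (fun g => if Req_EM_T g 0 then Derive N 0 else N g / g) z.
Proof.
  destruct (Req_EM_T z 0) as [hz|hz].
  - subst z. apply continuity_pt_filterlim.
    pose proof (Derive_correct N 0 (HN 0)) as D. apply is_derive_Reals in D.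
    intros eps heps. destruct (D eps heps) as [del Hd].
    exists del. split; [apply cond_pos|].
    intros x [_ Hx]. simpl in *. unfold R_dist in *.
    destruct (Req_EM_T 0 0) as [_|n]; [|congruence].
    destruct (Req_EM_T x 0) as [hx|hx].
    + rewrite Rminus_diag, Rabs_R0. auto.
    + specialize (Hd x hx). replace (x - 0) with x in Hx by ring.
      specialize (Hd Hx). rewrite Rplus_0_l, HN0, Rminus_0_r in Hd. exact Hd.
  - apply (continuous_ext_loc _ (fun g => N g / g)).
    + assert (hp : 0 < Rabs z) by (apply Rabs_pos_lt; auto).
      exists (mkposreal _ hp). intros y Hy.
      destruct (Req_EM_T y 0) as [e|e]; auto.
      exfalso. subst y. unfold ball in Hy; simpl in Hy.
      unfold AbsRing_ball, abs, minus, plus, opp in Hy; simpl in Hy.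
      rewrite Rplus_0_l, Rabs_Ropp in Hy. lra.
    + assert (C1 : continuity_pt N z).
      { apply continuity_pt_filterlim. apply (ex_derive_continuous N). auto. }
      pose proof (continuity_pt_div N (fun g => g) z C1 (continuity_pt_id z) hz) as C.
      apply continuity_pt_filterlim in C. exact C.
Qed.

Lemma sing_ex (N : R -> R) a b : N 0 = 0 -> (forall g, ex_derive N g) ->
  0 <= a -> 0 <= b -> ex_RInt (fun g => N g / g) a b.
Proof.
  intros HN0 HN ha hb.
  apply ex_RInt_ext with (f := fun g => if Req_EM_T g 0 then Derive N 0 else N g / g).
  - intros x [h1 h2]. destruct (Req_EM_T x 0) as [e|e]; auto.
    exfalso. subst. unfold Rmin in h1. destruct (Rle_dec a b); lra.
  - apply (ex_RInt_continuous (V:=R_CompleteNormedModule)). intros; apply sing_cont; auto.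
Qed.

Lemma div_ex (N : R -> R) a b : (forall g, ex_derive N g) ->
  0 < a -> 0 < b -> ex_RInt (fun g => N g / g) a b.
Proof.
  intros HN ha hb. apply (ex_RInt_continuous (V:=R_CompleteNormedModule)). intros z hz.
  assert (C1 : continuity_pt N z).
  { apply continuity_pt_filterlim. apply (ex_derive_continuous N). auto. }
  assert (hz' : z <> 0) by (unfold Rmin in hz; destruct (Rle_dec a b); lra).
  pose proof (continuity_pt_div N (fun g => g) z C1 (continuity_pt_id z) hz') as C.
  apply continuity_pt_filterlim in C. exact C.
Qed.
Lemma RInt_minus' (f : R -> R) g a b : ex_RInt f a b -> ex_RInt g a b ->
  RInt (fun x => f x - g x) a b = RInt f a b - RInt g a b.
Proof. intros; exact (RInt_minus f g a b H H0). Qed.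
Lemma ex_RInt_minus' (f : R -> R) g a b : ex_RInt f a b -> ex_RInt g a b ->
  ex_RInt (fun x => f x - g x) a b.
Proof. intros; exact (ex_RInt_minus f g a b H H0). Qed.
Lemma RInt_scal' (f : R -> R) a b c : ex_RInt f a b ->
  RInt (fun x => c * f x) a b = c * RInt f a b.
Proof. intros; exact (RInt_scal f a b c H). Qed.
Lemma ex_RInt_scal' (f : R -> R) a b c : ex_RInt f a b -> ex_RInt (fun x => c * f x) a b.
Proof. intros; exact (ex_RInt_scal f a b c H). Qed.
Lemma RInt_const' a b c : RInt (fun _ => c) a b = c * (b - a).
Proof. rewrite RInt_const. unfold scal; simpl; unfold mult; simpl. ring. Qed.
Lemma RInt_Chasles' (f : R -> R) a b c : ex_RInt f a b -> ex_RInt f b c ->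
  RInt f a b + RInt f b c = RInt f a c.
Proof. intros; exact (RInt_Chasles f a b c H H0). Qed.
Lemma ex_RInt_cont (f : R -> R) a b : (forall z, continuous f z) -> ex_RInt f a b.
Proof. intros; apply (ex_RInt_continuous (V:=R_CompleteNormedModule)); auto. Qed.
Lemma RInt_shift (f : R -> R) a b c : ex_RInt f (a + c) (b + c) ->
  RInt (fun g => f (g + c)) a b = RInt f (a + c) (b + c).
Proof.
  intro H. pose proof (RInt_comp_lin f 1 c a b) as R.
  replace (1 * a + c) with (a + c) in R by ring. replace (1 * b + c) with (b + c) in R by ring.
  rewrite <- R by exact H. apply RInt_ext. intros x _. unfold scal; simpl; unfold mult; simpl. rewrite Rmult_1_l. f_equal. ring.
Qed.
Lemma div_le S g c t : 0 < g -> 0 < t -> S * t <= c * g -> S / g <= c / t.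
Proof.
  intros hg ht h. unfold Rdiv. apply Rmult_le_reg_r with (g * t). nra.
  replace (S * / g * (g * t)) with (S * t) by (field; lra).
  replace (c * / t * (g * t)) with (c * g) by (field; lra). lra.
Qed.
Lemma RInt_le_const f a b c : a <= b -> ex_RInt f a b -> (forall x, a < x < b -> f x <= c) ->
  RInt f a b <= c * (b - a).
Proof.
  intros. rewrite <- RInt_const'. apply RInt_le; auto. apply ex_RInt_const.
Qed.
Lemma RInt_ge_const f a b c : a <= b -> ex_RInt f a b -> (forall x, a < x < b -> c <= f x) ->
  c * (b - a) <= RInt f a b.
Proof.
  intros. rewrite <- RInt_const'. apply RInt_le; auto. apply ex_RInt_const.
Qed.
Section S.
Variable F F' : R -> R.
Hypothesis HF' : forall x, derivable_pt_lim F x (F' x).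
Hypothesis HF'even : forall x, F' (- x) = F' x.
Hypothesis HF'nonneg : forall x, 0 <= F' x.
Hypothesis HF'decr : forall a b, 0 <= a -> a <= b -> F' b <= F' a.

Lemma HFd : forall z, is_derive F z (F' z).
Proof. intro z; apply is_derive_Reals; apply HF'. Qed.
Lemma exF : forall z, ex_derive (fun x => F x) z.
Proof. intro z; exists (F' z); apply HFd. Qed.
Lemma DFe : forall z, Derive (fun x => F x) z = F' z.
Proof. intro z; apply is_derive_unique; apply HFd. Qed.

Ltac autod := auto_derive; [repeat split; apply exF | rewrite ?DFe; unfold Rminus; ring].

Lemma F_odd t : F (- t) = 2 * F 0 - F t.
Proof.
  assert (H : forall a b, a < b -> F b + F (-b) = F a + F (-a)).
  { intros a b Hab.
    destruct (MVT_cor2 (fun t => F t + F (-t)) (fun t => F' t - F' (-t)) a b Hab) as [c [Hc _]].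
    - intros c _. apply is_derive_Reals. autod.
    - rewrite HF'even in Hc. lra. }
  destruct (Rtotal_order t 0) as [h|[h|h]].
  - pose proof (H t 0 h). replace (-0) with 0 in H0 by ring. lra.
  - subst. replace (-0) with 0 by ring. ring.
  - pose proof (H 0 t h). replace (-0) with 0 in H0 by ring. lra.
Qed.

Lemma F_incr a b : a <= b -> F a <= F b.
Proof.
  intro h; destruct h as [h|h]; [|subst; lra].
  destruct (MVT_cor2 F F' a b h) as [c [Hc _]]. { intros; apply HF'. }
  pose proof (HF'nonneg c). nra.
Qed.

Lemma F'_abs a b : Rabs a <= Rabs b -> F' b <= F' a.
Proof.
  intro h. assert (E1 : F' a = F' (Rabs a)).
  { unfold Rabs; destruct (Rcase_abs a); [rewrite HF'even|]; auto. }
  assert (E2 : F' b = F' (Rabs b)).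
  { unfold Rabs; destruct (Rcase_abs b); [rewrite HF'even|]; auto. }
  rewrite E1, E2. apply HF'decr; auto. apply Rabs_pos.
Qed.

Lemma F_conc a b c : 0 <= a -> a < b -> b < c ->
  (F c - F b) * (b - a) <= (F b - F a) * (c - b).
Proof.
  intros h0 h1 h2.
  destruct (MVT_cor2 F F' a b h1) as [c1 [Hc1 Hc1']]. { intros; apply HF'. }
  destruct (MVT_cor2 F F' b c h2) as [c2 [Hc2 Hc2']]. { intros; apply HF'. }
  assert (F' c2 <= F' c1) by (apply HF'decr; lra).
  rewrite Hc1, Hc2. assert (0 < (b-a)*(c-b)) by nra. nra.
Qed.

Lemma S_decr g x y : 0 <= g -> 0 <= x -> x <= y ->
  F (g + y) + F (g - y) <= F (g + x) + F (g - x).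
Proof.
  intros hg hx h; destruct h as [h|h]; [|subst; lra].
  destruct (MVT_cor2 (fun t => F (g+t) + F (g-t)) (fun t => F' (g+t) - F' (g-t)) x y h)
    as [c [Hc Hc']].
  - intros c _. apply is_derive_Reals. autod.
  - assert (F' (g + c) <= F' (g - c)).
    { apply F'_abs. rewrite (Rabs_pos_eq (g+c)) by lra.
      apply Rabs_le; lra. }
    simpl in Hc. nra.
Qed.

Variable A : R.
Hypothesis HA : forall t, Rabs (F t - F 0) <= A.
Definition E t := F t - F 0.
Lemma E_le t : E t <= A.
Proof. unfold E; pose proof (HA t); apply Rabs_le_between in H; lra. Qed.
Lemma E_ge t : - A <= E t.
Proof. unfold E; pose proof (HA t); apply Rabs_le_between in H; lra. Qed.
Lemma E_nonneg t : 0 <= t -> 0 <= E t.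
Proof. intro; unfold E; pose proof (F_incr 0 t H); lra. Qed.
Lemma E_odd t : E (- t) = - E t.
Proof. unfold E; rewrite F_odd; ring. Qed.
Lemma exE : forall z, ex_derive E z.
Proof. intro z. unfold E. auto_derive. apply exF. Qed.
Lemma E_cont : forall z, continuous E z.
Proof. intro; apply (ex_derive_continuous E), exE. Qed.

Lemma exS t a b : 0 <= a -> 0 <= b -> ex_RInt (fun g => (E (g + t) + E (g - t)) / g) a b.
Proof.
  intros. apply (sing_ex (fun g => E (g + t) + E (g - t))); auto.
  - rewrite Rplus_0_l. replace (0 - t) with (- t) by ring. rewrite E_odd; ring.
  - intro g. unfold E. auto_derive. repeat split; apply exF.
Qed.
Lemma ex2E a b : 0 <= a -> 0 <= b -> ex_RInt (fun g => 2 * E g / g) a b.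
Proof.
  intros. apply (sing_ex (fun g => 2 * E g)); auto.
  - unfold E; ring.
  - intro g. unfold E. auto_derive. repeat split; apply exF.
Qed.

Lemma Kbound t b : 0 <= t <= b ->
  - A <= RInt (fun g => (E (g + t) + E (g - t)) / g) 0 b - RInt (fun g => 2 * E g / g) t b
  <= 3 * A.
Proof.
  intros [ht htb]. assert (hA : 0 <= A) by (pose proof (HA 0); pose proof (Rabs_pos (F 0 - F 0)); lra).
  destruct ht as [ht|ht].
  2:{ subst t. rewrite (RInt_ext _ (fun g => 2 * E g / g)). lra.
      intros x _. replace (x + 0) with x by ring. replace (x - 0) with x by ring. f_equal; ring. }
  rewrite <- (RInt_Chasles' _ 0 t b) by (apply exS; lra).
  assert (P1lo : 0 <= RInt (fun g => (E (g + t) + E (g - t)) / g) 0 t).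
  { apply RInt_ge_0; [lra | apply exS; lra |]. intros g hg.
    apply Rdiv_le_0_compat; [|lra].
    replace (g - t) with (- (t - g)) by ring. rewrite E_odd. unfold E.
    pose proof (F_incr (t - g) (g + t)). lra. }
  assert (P1hi : RInt (fun g => (E (g + t) + E (g - t)) / g) 0 t <= 3 * A).
  { rewrite <- (RInt_Chasles' _ 0 (t/2) t) by (apply exS; lra).
    assert (Ha : RInt (fun g => (E (g + t) + E (g - t)) / g) 0 (t/2) <= (4 * A / t) * (t/2 - 0)).
    { apply RInt_le_const; [lra | apply exS; lra |]. intros g hg.
      apply div_le; try lra.
      replace (g - t) with (- (t - g)) by ring. rewrite E_odd.
      pose proof (F_conc 0 (t - g) (t + g)) as C.
      assert (0 <= E (t - g) <= A) by (split; [apply E_nonneg; lra | apply E_le]).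
      assert (0 <= E (g + t) - E (t - g)).
      { unfold E. pose proof (F_incr (t - g) (g + t)). lra. }
      replace (g + t) with (t + g) in * by ring.
      unfold E in *. assert (h := C ltac:(lra) ltac:(lra) ltac:(lra)).
      replace (t + g - (t - g)) with (2 * g) in h by ring.
      replace (t - g - 0) with (t - g) in h by ring.
      clear C. set (D := F (t + g) - F (t - g)) in *. set (e := F (t - g) - F 0) in *.
      assert (hD : 0 <= D) by (unfold D; pose proof (F_incr (t - g) (t + g)); lra).
      assert (h1 : 0 <= D * (t - 2 * g)) by (apply Rmult_le_pos; lra).
      assert (h2 : e * (2 * g) <= A * (2 * g)) by (apply Rmult_le_compat_r; lra).
      replace (F (t + g) - F 0 + - (F (t - g) - F 0)) with D by (unfold D; ring).
      assert (h3 : D * t = 2 * (D * (t - g)) - D * (t - 2 * g)) by ring.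
      replace (F (t + g) - F 0 + - e) with D by (unfold D, e; ring). lra. }
    assert (Hb : RInt (fun g => (E (g + t) + E (g - t)) / g) (t/2) t <= (2 * A / t) * (t - t/2)).
    { apply RInt_le_const; [lra | apply exS; lra |]. intros g hg.
      apply div_le; try lra.
      replace (g - t) with (- (t - g)) by ring. rewrite E_odd.
      assert (0 <= E (t - g)) by (apply E_nonneg; lra).
      pose proof (E_le (g + t)).
      assert (0 <= E (g + t) - E (t - g)).
      { unfold E. pose proof (F_incr (t - g) (g + t)). lra. }
      replace (E (g + t) + - E (t - g)) with (E (g + t) - E (t - g)) by ring.
      assert (E (g + t) - E (t - g) <= A) by lra.
      set (D := E (g + t) - E (t - g)) in *.
      assert (h1 : D * t <= A * t) by (apply Rmult_le_compat_r; lra).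
      assert (h2 : A * t <= A * (2 * g)) by (apply Rmult_le_compat_l; lra).
      lra. }
    replace (4 * A / t * (t / 2 - 0)) with (2 * A) in Ha by (field; lra).
    replace (2 * A / t * (t - t / 2)) with A in Hb by (field; lra). lra. }
  assert (P2hi : RInt (fun g => (E (g + t) + E (g - t)) / g) t b <= RInt (fun g => 2 * E g / g) t b).
  { apply RInt_le; [lra | apply exS; lra | apply ex2E; lra |]. intros g hg.
    unfold Rdiv. apply Rmult_le_compat_r. apply Rlt_le, Rinv_0_lt_compat; lra.
    pose proof (F_conc (g - t) g (g + t)) as C.
    assert (h := C ltac:(lra) ltac:(lra) ltac:(lra)).
    replace (g - (g - t)) with t in h by ring. replace (g + t - g) with t in h by ring.
    clear C. apply Rmult_le_reg_r in h; [|lra]. unfold E. lra. }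
  assert (P2lo : - A <= RInt (fun g => (E (g + t) + E (g - t)) / g) t b - RInt (fun g => 2 * E g / g) t b).
  { assert (X1 := exS t t b ltac:(lra) ltac:(lra)).
    assert (X2 := ex2E t b ltac:(lra) ltac:(lra)).
    rewrite <- (RInt_minus' _ _ _ _ X1 X2).
    assert (exEs : forall a c, ex_RInt (fun g => E (g - t)) a c).
    { intros; apply ex_RInt_cont. intro z.
      apply (ex_derive_continuous (fun g => E (g - t))). unfold E. auto_derive. apply exF. }
    assert (exE0 : forall a c, ex_RInt E a c) by (intros; apply ex_RInt_cont, E_cont).
    assert (L : RInt (fun g => / t * (E (g - t) - E g)) t b
               <= RInt (fun g => (E (g + t) + E (g - t)) / g - 2 * E g / g) t b).
    { apply RInt_le; [lra | | |].
      - apply (ex_RInt_scal' (fun g => E (g - t) - E g)).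
        apply (ex_RInt_minus' (fun g => E (g - t)) E); auto.
      - apply (ex_RInt_minus' _ _ _ _ X1 X2).
      - intros g hg.
        assert (w : E (g - t) - E g <= 0) by (unfold E; pose proof (F_incr (g - t) g); lra).
        assert (w2 : 0 <= E (g + t) - E g) by (unfold E; pose proof (F_incr g (g + t)); lra).
        replace ((E (g + t) + E (g - t)) / g - 2 * E g / g)
          with ((E (g + t) - E g) / g + (E (g - t) - E g) / g) by (field; lra).
        assert (0 <= (E (g + t) - E g) / g) by (apply Rdiv_le_0_compat; lra).
        assert (/ t * (E (g - t) - E g) <= (E (g - t) - E g) / g).
        { rewrite Rmult_comm. unfold Rdiv.
          apply Rmult_le_compat_neg_l; [exact w|]. apply Rinv_le_contravar; lra. }
        lra. }
    rewrite (RInt_scal' (fun g => E (g - t) - E g)) in L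
      by (apply (ex_RInt_minus' (fun g => E (g - t)) E); auto).
    rewrite (RInt_minus' (fun g => E (g - t)) E) in L by auto.
    replace (fun g => E (g - t)) with (fun g => E (g + - t)) in L
      by (apply functional_extensionality; intro; f_equal; ring).
    rewrite RInt_shift in L by (apply exE0).
    replace (t + - t) with 0 in L by ring.
    rewrite <- (RInt_Chasles' E 0 t (b + - t)) in L by auto.
    rewrite <- (RInt_Chasles' E t (b + -t) b) in L by auto.
    assert (I1 : 0 <= RInt E 0 t).
    { apply RInt_ge_0; auto. lra. intros; apply E_nonneg; lra. }
    assert (I2 : RInt E (b + - t) b <= A * (b - (b + - t))).
    { apply RInt_le_const; auto. lra. intros; apply E_le. }
    replace (RInt E 0 t + RInt E t (b + - t) - (RInt E t (b + - t) + RInt E (b + - t) b))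
      with (RInt E 0 t - RInt E (b + - t) b) in L by ring.
    assert (- A <= / t * (RInt E 0 t - RInt E (b + - t) b)).
    { replace (- A) with (/ t * (0 - A * (b - (b + - t)))) by (field; lra).
      apply Rmult_le_compat_l. apply Rlt_le, Rinv_0_lt_compat; lra. lra. }
    lra. }
  lra.
Qed.

Lemma integrand_eq x y g : HF_integrand F x y g =
  (E (g + x) + E (g - x)) / g - (E (g + y) + E (g - y)) / g.
Proof.
  unfold HF_integrand, E.
  replace (y - g) with (- (g - y)) by ring. replace (x - g) with (- (g - x)) by ring.
  rewrite !F_odd. replace (y + g) with (g + y) by ring. replace (x + g) with (g + x) by ring.
  unfold Rdiv; ring.
Qed.

Lemma exI x y a b : 0 <= a -> 0 <= b -> ex_RInt (HF_integrand F x y) a b.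
Proof.
  intros. apply (sing_ex (fun g => F (y - g) - F (y + g) - F (x - g) + F (x + g))); auto.
  - rewrite !Rminus_0_r, !Rplus_0_r. ring.
  - intro g. auto_derive. repeat split; apply exF.
Qed.

Lemma main_est x y b : 0 <= x -> x < y -> y <= b ->
  - (4 * A) <= RInt (HF_integrand F x y) 0 b - RInt (fun g => (F g - F (- g)) / g) x y <= 4 * A.
Proof.
  intros hx hxy hyb.
  assert (X1 := exS x 0 b ltac:(lra) ltac:(lra)).
  assert (X2 := exS y 0 b ltac:(lra) ltac:(lra)).
  rewrite (RInt_ext (HF_integrand F x y)
     (fun g => (E (g + x) + E (g - x)) / g - (E (g + y) + E (g - y)) / g))
    by (intros; apply integrand_eq).
  rewrite (RInt_minus' _ _ _ _ X1 X2).
  assert (Q : RInt (fun g => (F g - F (- g)) / g) x y = RInt (fun g => 2 * E g / g) x y).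
  { assert (P : forall z, (F z - F (- z)) / z = 2 * E z / z).
    { intro z. rewrite F_odd. unfold E, Rdiv. ring. }
    apply RInt_ext. intros z _. exact (P z). }
  rewrite Q.
  pose proof (Kbound x b ltac:(lra)). pose proof (Kbound y b ltac:(lra)).
  assert (Y := RInt_Chasles' (fun g => 2 * E g / g) x y b (ex2E x y ltac:(lra) ltac:(lra)) (ex2E y b ltac:(lra) ltac:(lra))).
  lra.
Qed.

Lemma exD u v a b : 0 < a -> 0 < b -> ex_RInt (fun g => (F (g + u) - F (g + v)) / g) a b.
Proof.
  intros. apply (div_ex (fun g => F (g + u) - F (g + v))); auto.
  intro g. auto_derive. repeat split; apply exF.
Qed.

Lemma exF0 a b : ex_RInt F a b.
Proof. apply ex_RInt_cont. intro z. apply (ex_derive_continuous F). exists (F' z); apply HFd. Qed.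

Lemma exFs c a b : ex_RInt (fun g => F (g + c)) a b.
Proof.
  apply ex_RInt_cont. intro z. apply (ex_derive_continuous (fun g => F (g + c))).
  auto_derive. apply exF.
Qed.

Lemma tail1 u v b1 b2 : v <= u -> 0 < b1 <= b2 ->
  0 <= RInt (fun g => (F (g + u) - F (g + v)) / g) b1 b2 <= 2 * (u - v) * A / b1.
Proof.
  intros huv [hb1 hb12].
  assert (X := exD u v b1 b2 ltac:(lra) ltac:(lra)).
  split.
  { apply RInt_ge_0; auto. intros g hg. apply Rdiv_le_0_compat; [|lra].
    pose proof (F_incr (g + v) (g + u)). lra. }
  assert (exG : ex_RInt (fun g => F (g + u) - F (g + v)) b1 b2).
  { apply (ex_RInt_minus' (fun g => F (g + u)) (fun g => F (g + v))).
    - apply ex_RInt_cont. intro z. apply (ex_derive_continuous (fun g => F (g + u))).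
      auto_derive. apply exF.
    - apply ex_RInt_cont. intro z. apply (ex_derive_continuous (fun g => F (g + v))).
      auto_derive. apply exF. }
  assert (L : RInt (fun g => (F (g + u) - F (g + v)) / g) b1 b2
              <= RInt (fun g => / b1 * (F (g + u) - F (g + v))) b1 b2).
  { apply RInt_le; auto.
    - apply (ex_RInt_scal' (fun g => F (g + u) - F (g + v))); auto.
    - intros g hg. rewrite Rmult_comm. unfold Rdiv. apply Rmult_le_compat_l.
      pose proof (F_incr (g + v) (g + u)). lra.
      apply Rinv_le_contravar; lra. }
  rewrite (RInt_scal' (fun g => F (g + u) - F (g + v))) in L by auto.
  rewrite (RInt_minus' (fun g => F (g + u)) (fun g => F (g + v))) in L
    by apply exFs.
  rewrite !RInt_shift in L by apply exF0.
  rewrite <- (RInt_Chasles' F (b1 + v) (b1 + u) (b2 + v)) in L by apply exF0.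
  rewrite <- (RInt_Chasles' F (b1 + u) (b2 + v) (b2 + u)) in L by apply exF0.
  assert (I1 : RInt F (b2 + v) (b2 + u) <= (F 0 + A) * ((b2 + u) - (b2 + v))).
  { apply RInt_le_const; auto. lra. apply exF0. intros; pose proof (E_le x); unfold E in *; lra. }
  assert (I2 : (F 0 - A) * ((b1 + u) - (b1 + v)) <= RInt F (b1 + v) (b1 + u)).
  { apply RInt_ge_const; auto. lra. apply exF0. intros; pose proof (E_ge x); unfold E in *; lra. }
  replace (RInt F (b1 + u) (b2 + v) + RInt F (b2 + v) (b2 + u) -
      (RInt F (b1 + v) (b1 + u) + RInt F (b1 + u) (b2 + v)))
    with (RInt F (b2 + v) (b2 + u) - RInt F (b1 + v) (b1 + u)) in L by ring.
  assert (/ b1 * (RInt F (b2 + v) (b2 + u) - RInt F (b1 + v) (b1 + u)) <= / b1 * (2 * (u - v) * A)).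
  { apply Rmult_le_compat_l. apply Rlt_le, Rinv_0_lt_compat; lra. lra. }
  unfold Rdiv. lra.
Qed.

Lemma RInt_plus' (f g : R -> R) a b : ex_RInt f a b -> ex_RInt g a b ->
  RInt (fun x => f x + g x) a b = RInt f a b + RInt g a b.
Proof. intros; exact (RInt_plus f g a b H H0). Qed.

Lemma tail_abs u v b1 b2 : 0 < b1 <= b2 ->
  Rabs (RInt (fun g => (F (g + u) - F (g + v)) / g) b1 b2) <= 2 * Rabs (u - v) * A / b1.
Proof.
  intros hb. destruct (Rle_dec v u) as [h|h].
  - rewrite (Rabs_pos_eq (u - v)) by lra. pose proof (tail1 u v b1 b2 h hb).
    rewrite Rabs_pos_eq; lra.
  - assert (P : forall g, (F (g + u) - F (g + v)) / g = -1 * ((F (g + v) - F (g + u)) / g)).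
    { intro g. unfold Rdiv; ring. }
    rewrite (RInt_ext _ (fun g => -1 * ((F (g + v) - F (g + u)) / g))) by (intros; apply P).
    rewrite (RInt_scal' (fun g => (F (g + v) - F (g + u)) / g)) by (apply exD; lra).
    pose proof (tail1 v u b1 b2 ltac:(lra) hb).
    rewrite Rabs_mult. replace (Rabs (-1)) with 1 by (unfold Rabs; destruct (Rcase_abs (-1)); lra).
    rewrite Rmult_1_l.
    rewrite (Rabs_pos_eq (RInt _ b1 b2)) by lra.
    rewrite (Rabs_left (u - v)) by lra. replace (- (u - v)) with (v - u) by ring. lra.
Qed.

Lemma Jtail x y b1 b2 : 0 < b1 <= b2 ->
  Rabs (RInt (HF_integrand F x y) 0 b2 - RInt (HF_integrand F x y) 0 b1)
  <= 4 * Rabs (x - y) * A / b1.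
Proof.
  intros hb.
  assert (C := RInt_Chasles' (HF_integrand F x y) 0 b1 b2 (exI x y 0 b1 ltac:(lra) ltac:(lra))
     (exI x y b1 b2 ltac:(lra) ltac:(lra))).
  assert (C2 : RInt (HF_integrand F x y) 0 b2 - RInt (HF_integrand F x y) 0 b1
     = RInt (HF_integrand F x y) b1 b2) by lra.
  rewrite C2.
  assert (P : forall g, HF_integrand F x y g =
     (F (g + x) - F (g + y)) / g + (F (g + - x) - F (g + - y)) / g).
  { intro g. unfold HF_integrand.
    replace (y - g) with (- (g + - y)) by ring. replace (x - g) with (- (g + - x)) by ring.
    rewrite !F_odd. replace (y + g) with (g + y) by ring. replace (x + g) with (g + x) by ring.
    unfold Rdiv; ring. }
  rewrite (RInt_ext _ (fun g => (F (g + x) - F (g + y)) / g + (F (g + - x) - F (g + - y)) / g))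
    by (intros; apply P).
  rewrite (RInt_plus' (fun g => (F (g + x) - F (g + y)) / g) (fun g => (F (g + - x) - F (g + - y)) / g))
    by (apply exD; lra).
  eapply Rle_trans. apply Rabs_triang.
  pose proof (tail_abs x y b1 b2 hb). pose proof (tail_abs (- x) (- y) b1 b2 hb).
  replace (- x - - y) with (- (x - y)) in H0 by ring. rewrite Rabs_Ropp in H0.
  unfold Rdiv in *. lra.
Qed.
End S.
From Stdlib Require Import Lia.
Lemma nat_big (r : R) : exists n : nat, r <= INR n.
Proof. destruct (INR_archimed 1 r) as [n Hn]; [lra|]. exists n; lra. Qed.

Lemma cauchy_lim (f : R -> R) C :
  (forall b1 b2, 1 <= b1 <= b2 -> Rabs (f b2 - f b1) <= C / b1) ->
  exists l, forall eps, 0 < eps -> exists M, forall b, M <= b -> Rabs (f b - l) < eps.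
Proof.
  intro H.
  assert (HC : 0 <= C).
  { pose proof (H 1 1 ltac:(lra)). rewrite Rminus_diag, Rabs_R0 in H0. lra. }
  set (u := fun n : nat => f (INR n + 1)).
  assert (Hu : forall n m, (n <= m)%nat -> Rabs (u m - u n) <= C / (INR n + 1)).
  { intros n m hnm. unfold u. apply H. pose proof (pos_INR n). apply le_INR in hnm. lra. }
  assert (Cu : Cauchy_crit u).
  { intros eps heps.
    destruct (nat_big (C / eps)) as [N HN]. exists N. intros n m hn hm.
    unfold R_dist.
    assert (key : forall p q, (N <= p)%nat -> (p <= q)%nat -> Rabs (u q - u p) < eps).
    { intros p q hp hpq. eapply Rle_lt_trans. apply Hu; auto.
      apply le_INR in hp. assert (0 < INR p + 1) by (pose proof (pos_INR p); lra).
      apply Rmult_lt_reg_r with (INR p + 1); auto.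
      unfold Rdiv; rewrite Rmult_assoc, Rinv_l by lra.
      assert (C <= eps * INR N).
      { replace C with (C / eps * eps) by (field; lra). rewrite Rmult_comm.
        apply Rmult_le_compat_l; lra. }
      nra. }
    destruct (Compare_dec.le_lt_dec n m) as [h|h].
    - rewrite <- Rabs_Ropp. replace (- (u n - u m)) with (u m - u n) by ring. apply key; auto.
    - apply key; auto; lia. }
  destruct (R_complete u Cu) as [l Hl].
  exists l. intros eps heps.
  exists (Rmax 1 (2 * C / eps + 2)). intros b hb.
  assert (hb1 : 1 <= b) by (pose proof (Rmax_l 1 (2 * C / eps + 2)); lra).
  assert (hb2 : 2 * C / eps + 2 <= b) by (pose proof (Rmax_r 1 (2 * C / eps + 2)); lra).
  destruct (Hl (eps / 2)) as [N1 HN1]; [lra|].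
  destruct (nat_big b) as [N2 HN2].
  set (n := (N1 + N2)%nat).
  assert (hn : b <= INR n + 1).
  { unfold n. rewrite plus_INR. pose proof (pos_INR N1). lra. }
  specialize (HN1 n ltac:(unfold n; lia)). unfold R_dist in HN1. unfold u in HN1.
  pose proof (H b (INR n + 1) ltac:(lra)) as Hf.
  assert (C / b < eps / 2).
  { apply Rmult_lt_reg_r with b; [lra|]. unfold Rdiv. rewrite Rmult_assoc, Rinv_l by lra.
    rewrite Rmult_1_r.
    assert (2 * C < eps * (b - 1)).
    { replace (2 * C) with (eps * (2 * C / eps)) by (field; lra).
      apply Rmult_lt_compat_l; lra. }
    replace (eps * / 2 * b) with ((eps * (b - 1) + eps) / 2) by field. lra. }
  replace (f b - l) with ((f b - f (INR n + 1)) + (f (INR n + 1) - l)) by ring.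
  eapply Rle_lt_trans. apply Rabs_triang.
  rewrite <- Rabs_Ropp with (x := f b - f (INR n + 1)).
  replace (- (f b - f (INR n + 1))) with (f (INR n + 1) - f b) by ring. lra.
Qed.

Lemma imp_RInt g l : improper_int0 g l -> forall eps, 0 < eps ->
  exists M, forall b, M <= b -> 0 <= b -> Rabs (RInt g 0 b - l) < eps.
Proof.
  intros [Hi Hl] eps he. destruct (Hl eps he) as [M HM]. exists M. intros b hb hb0.
  destruct (Hi b hb0) as [pr]. rewrite (RInt_Reals g 0 b pr). apply HM; auto.
Qed.

Lemma imp_le g1 g2 l1 l2 B : improper_int0 g1 l1 -> improper_int0 g2 l2 ->
  (forall b, B <= b -> RInt g1 0 b <= RInt g2 0 b) -> l1 <= l2.
Proof.
  intros H1 H2 H. apply Rnot_lt_le. intro hl.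
  destruct (imp_RInt g1 l1 H1 ((l1 - l2)/2) ltac:(lra)) as [M1 HM1].
  destruct (imp_RInt g2 l2 H2 ((l1 - l2)/2) ltac:(lra)) as [M2 HM2].
  set (b := Rmax (Rmax M1 M2) (Rmax B 0)).
  assert (b1 : M1 <= b) by (unfold b; repeat (apply Rmax_Rle; left + right); lra).
  assert (b2 : M2 <= b) by (unfold b; apply Rmax_Rle; left; apply Rmax_Rle; right; lra).
  assert (b3 : B <= b) by (unfold b; apply Rmax_Rle; right; apply Rmax_Rle; left; lra).
  assert (b4 : 0 <= b) by (unfold b; apply Rmax_Rle; right; apply Rmax_Rle; right; lra).
  specialize (HM1 b b1 b4). specialize (HM2 b b2 b4). specialize (H b b3).
  apply Rabs_lt_between in HM1. apply Rabs_lt_between in HM2. lra.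
Qed.

Lemma imp_lo g l B lo : improper_int0 g l ->
  (forall b, B <= b -> lo <= RInt g 0 b) -> lo <= l.
Proof.
  intros H1 H. apply Rnot_lt_le. intro hl.
  destruct (imp_RInt g l H1 ((lo - l)/2) ltac:(lra)) as [M1 HM1].
  set (b := Rmax M1 (Rmax B 0)).
  assert (b1 : M1 <= b) by (unfold b; apply Rmax_Rle; left; lra).
  assert (b3 : B <= b) by (unfold b; apply Rmax_Rle; right; apply Rmax_Rle; left; lra).
  assert (b4 : 0 <= b) by (unfold b; apply Rmax_Rle; right; apply Rmax_Rle; right; lra).
  specialize (HM1 b b1 b4). specialize (H b b3).
  apply Rabs_lt_between in HM1. lra.
Qed.

Lemma imp_hi g l B hi : improper_int0 g l ->
  (forall b, B <= b -> RInt g 0 b <= hi) -> l <= hi.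
Proof.
  intros H1 H. apply Rnot_lt_le. intro hl.
  destruct (imp_RInt g l H1 ((l - hi)/2) ltac:(lra)) as [M1 HM1].
  set (b := Rmax M1 (Rmax B 0)).
  assert (b1 : M1 <= b) by (unfold b; apply Rmax_Rle; left; lra).
  assert (b3 : B <= b) by (unfold b; apply Rmax_Rle; right; apply Rmax_Rle; left; lra).
  assert (b4 : 0 <= b) by (unfold b; apply Rmax_Rle; right; apply Rmax_Rle; right; lra).
  specialize (HM1 b b1 b4). specialize (H b b3).
  apply Rabs_lt_between in HM1. lra.
Qed.

Theorem lemma5p7 (mu nu : R) (F F' : R -> R)
  (Hmu : 1/2 < mu) (Hnu0 : 0 < nu) (Hnu1 : nu < 1/2)
  (HF' : forall x, derivable_pt_lim F x (F' x))
  (HF'cont : continuity F')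
  (HF'even : forall x, F' (- x) = F' x)
  (HF'nonneg : forall x, 0 <= F' x)
  (HF'decr : forall a b, 0 <= a -> a <= b -> F' b <= F' a)
  (Lp Lm : R) (HLp : lim_pinf F Lp) (HLm : lim_minf F Lm)
  (Hjump : Lp - Lm = (mu - nu) * PI) :
  (forall x y, exists L, HF_diff F x y L) /\
  (forall x L1 L2, HF_diff F 0 x L1 -> HF_diff F 0 (- x) L2 -> L1 = L2) /\
  (forall x y L1 L2, 0 <= x -> x <= y ->
     HF_diff F 0 x L1 -> HF_diff F 0 y L2 -> L1 <= L2) /\
  (forall x y L, 0 <= x -> x < y -> HF_diff F x y L ->
     0 <= L /\
     exists pr : Riemann_integrable (fun g => (F g - F (- g)) / g) x y,
       - (2 * (mu - nu)) <= L - (1 / PI) * RiemannInt pr <= 2 * (mu - nu)).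
Proof.
  pose proof PI_RGT_0 as hpi.
  set (A := (mu - nu) * PI / 2).
  assert (Fodd := F_odd F F' HF' HF'even).
  assert (Finc := F_incr F F' HF' HF'nonneg).
  assert (Hsum : Lp + Lm = 2 * F 0).
  { apply Rle_antisym; apply Rnot_lt_le; intro h.
    - destruct (HLp ((Lp + Lm - 2 * F 0)/2) ltac:(lra)) as [M1 H1].
      destruct (HLm ((Lp + Lm - 2 * F 0)/2) ltac:(lra)) as [M2 H2].
      set (x := Rmax M1 (- M2)).
      specialize (H1 x (Rmax_l _ _)).
      specialize (H2 (- x) ltac:(pose proof (Rmax_r M1 (- M2)); unfold x; lra)).
      rewrite Fodd in H2.
      apply Rabs_lt_between in H1. apply Rabs_lt_between in H2. lra.
    - destruct (HLp ((2 * F 0 - Lp - Lm)/2) ltac:(lra)) as [M1 H1].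
      destruct (HLm ((2 * F 0 - Lp - Lm)/2) ltac:(lra)) as [M2 H2].
      set (x := Rmax M1 (- M2)).
      specialize (H1 x (Rmax_l _ _)).
      specialize (H2 (- x) ltac:(pose proof (Rmax_r M1 (- M2)); unfold x; lra)).
      rewrite Fodd in H2.
      apply Rabs_lt_between in H1. apply Rabs_lt_between in H2. lra. }
  assert (HA : forall t, Rabs (F t - F 0) <= A).
  { intro t. assert (Lp - F 0 = A) by (unfold A; lra).
    assert (F 0 - Lm = A) by (unfold A; lra).
    apply Rabs_le; split.
    - apply Rnot_lt_le; intro h.
      destruct (HLm (Lm - F t) ltac:(lra)) as [M HM].
      specialize (HM (Rmin M t) (Rmin_l _ _)).
      pose proof (Finc (Rmin M t) t (Rmin_r _ _)).
      apply Rabs_lt_between in HM. lra.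
    - apply Rnot_lt_le; intro h.
      destruct (HLp (F t - Lp) ltac:(lra)) as [M HM].
      specialize (HM (Rmax M t) (Rmax_l _ _)).
      pose proof (Finc t (Rmax M t) (Rmax_r _ _)).
      apply Rabs_lt_between in HM. lra. }
  assert (hA : 0 <= A) by (unfold A; apply Rmult_le_pos; [apply Rmult_le_pos|]; lra).
  split; [|split; [|split]].
  -
    intros x y.
    destruct (cauchy_lim (fun b => RInt (HF_integrand F x y) 0 b) (4 * Rabs (x - y) * A)) as [l Hl].
    { intros b1 b2 hb. apply (Jtail F F' HF' HF'even HF'nonneg A HA). lra. }
    exists (l / PI). unfold HF_diff.
    replace (PI * (l / PI)) with l by (field; lra).
    split.
    + intros b hb. constructor. apply ex_RInt_Reals_0. apply (exI F F' HF'); lra.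
    + intros eps he. destruct (Hl eps he) as [M HM]. exists (Rmax M 0).
      intros b pr hb. rewrite <- (RInt_Reals _ 0 b pr). apply HM.
      pose proof (Rmax_l M 0); lra.
  -
    intros x L1 L2 H1 H2. unfold HF_diff in *.
    assert (Eq : forall b, RInt (HF_integrand F 0 x) 0 b = RInt (HF_integrand F 0 (- x)) 0 b).
    { assert (P : forall g, HF_integrand F 0 x g = HF_integrand F 0 (- x) g).
      { intro g. unfold HF_integrand.
        replace (- x - g) with (- (x + g)) by ring. replace (- x + g) with (- (x - g)) by ring.
        rewrite (Fodd (x + g)), (Fodd (x - g)). unfold Rdiv. ring. }
      intro b. apply RInt_ext. intros g _. exact (P g). }
    assert (PI * L1 <= PI * L2).
    { apply (imp_le _ _ _ _ 0 H1 H2). intros b _. rewrite Eq. lra. }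
    assert (PI * L2 <= PI * L1).
    { apply (imp_le _ _ _ _ 0 H2 H1). intros b _. rewrite Eq. lra. }
    apply Rmult_eq_reg_l with PI; lra.
  -
    intros x y L1 L2 hx hxy H1 H2. unfold HF_diff in *.
    assert (PI * L1 <= PI * L2).
    { apply (imp_le _ _ _ _ 0 H1 H2). intros b hb.
      apply RInt_le; auto; try (apply (exI F F' HF'); lra).
      intros g hg. rewrite !(integrand_eq F F' HF' HF'even).
      pose proof (S_decr F F' HF' HF'even HF'decr g x y ltac:(lra) hx hxy).
      unfold E. unfold Rdiv. apply Rplus_le_compat_l. apply Ropp_le_contravar.
      apply Rmult_le_compat_r. apply Rlt_le, Rinv_0_lt_compat; lra. lra. }
    apply Rmult_le_reg_l with PI; lra.
  - intros x y L hx hxy H. unfold HF_diff in H. split.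
    + assert (0 <= PI * L).
      { apply (imp_lo _ _ 0 0 H). intros b hb.
        apply RInt_ge_0; auto; try (apply (exI F F' HF'); lra).
        intros g hg. rewrite (integrand_eq F F' HF' HF'even).
        pose proof (S_decr F F' HF' HF'even HF'decr g x y ltac:(lra) hx ltac:(lra)).
        unfold E. unfold Rdiv. rewrite <- Rmult_minus_distr_r.
        apply Rmult_le_pos. lra. apply Rlt_le, Rinv_0_lt_compat; lra. }
      apply Rmult_le_reg_l with PI; lra.
    + assert (X : ex_RInt (fun g => (F g - F (- g)) / g) x y).
      { apply (sing_ex (fun g => F g - F (- g))); try lra.
        - replace (- 0) with 0 by ring. ring.
        - intro g. auto_derive. repeat split; apply exF with (F' := F'); auto. }
      exists (ex_RInt_Reals_0 _ _ _ X).
      rewrite <- RInt_Reals.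
      set (D := RInt (fun g => (F g - F (- g)) / g) x y).
      pose proof (main_est F F' HF' HF'even HF'nonneg HF'decr A HA) as ME.
      assert (lo : D - 4 * A <= PI * L).
      { apply (imp_lo _ _ y _ H). intros b hb. pose proof (ME x y b hx hxy hb). unfold D. lra. }
      assert (hi : PI * L <= D + 4 * A).
      { apply (imp_hi _ _ y _ H). intros b hb. pose proof (ME x y b hx hxy hb). unfold D. lra. }
      assert (e1 : L - 1 / PI * D = / PI * (PI * L - D)) by (field; lra).
      rewrite e1.
      assert (e2 : 4 * A = PI * (2 * (mu - nu))) by (unfold A; field).
      assert (hpi' : 0 < / PI) by (apply Rinv_0_lt_compat; lra).
      split.
      * replace (- (2 * (mu - nu))) with (/ PI * (- (4 * A))) by (rewrite e2; field; lra).
        apply Rmult_le_compat_l; lra.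
      * replace (2 * (mu - nu)) with (/ PI * (4 * A)) by (rewrite e2; field; lra).
        apply Rmult_le_compat_l; lra.
Qed.
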